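(* Let $G$ be a simple graph on at least $4$ vertices and let $x,y$ be two distinct vertices of $G$. Suppose that (1) $G+xy$ is $2$-connected; (2) $N_2(G)\setminus\{x,y\}$ is an independent set of $G$; and (3) $G$ contains no cycle of length $4$. Then $G$ contains two $(x,y)$-paths $P_1,P_2$ with $|P_1|\not\equiv |P_2|\pmod 3$.
   Context: $G+xy$ denotes the graph obtained from $G$ by adding the edge $xy$ (if not already present). $N_2(G)$ denotes the set of vertices of degree exactly $2$ in $G$. An $(x,y)$-path is a path with end-vertices $x$ and $y$; $|P|$ is its number of edges. A graph is $2$-connected if it has at least $3$ vertices and deleting any single vertex leaves it connected. *)

(* Defs.v *)
From mathcomp Require Import all_boot.
Set Implicit Arguments. Unset Strict Implicit. Unset Printing Implicit Defensive.

Section Graphs.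
Variable T : finType.

Definition simple_graph (e : rel T) : Prop := irreflexive e /\ symmetric e.

Definition add_edge (e : rel T) (x y : T) : rel T :=
  fun u v => [|| e u v, (u == x) && (v == y) | (u == y) && (v == x)].

Definition connected_in (e : rel T) (S : {set T}) : Prop :=
  forall u w, u \in S -> w \in S ->
    exists p : seq T, [&& path e u p, last u p == w & all (mem S) p].

Definition two_connected (e : rel T) : Prop :=
  2 < #|T| /\ forall v : T, connected_in e [set~ v].

Definition deg (e : rel T) (u : T) : nat := #|[set v | e u v]|.

Definition N2 (e : rel T) : {set T} := [set u | deg e u == 2].

Definition independent (e : rel T) (S : {set T}) : Prop :=
  forall u v, u \in S -> v \in S -> ~~ e u v.

Definition has_C4 (e : rel T) : Prop :=
  exists a b c d : T, uniq [:: a; b; c; d] /\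
    [&& e a b, e b c, e c d & e d a].

(* an (x,y)-path: x :: p is a path with distinct vertices ending at y;
   its number of edges is size p *)
Definition xy_path (e : rel T) (x y : T) (p : seq T) : Prop :=
  [&& path e x p, last x p == y & uniq (x :: p)].

End Graphs.

(* Main.v *)
Require Import Defs.
From mathcomp Require Import all_boot.
From mathcomp Require Import zify.
From Stdlib Require Import Classical.
Set Implicit Arguments. Unset Strict Implicit. Unset Printing Implicit Defensive.

Ltac mlia := repeat match goal with
  | H := _ |- _ => clearbody H
  | H : is_true (path _ _ _) |- _ => clear H
  | H : is_true (uniq _) |- _ => clear H
  | H : is_true (_ \in _) |- _ => clear H
  | H : is_true (_ \notin _) |- _ => clear H
  | H : forall _, _ |- _ => clear H
  | H : _ = _ :> seq _ |- _ => clear H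
  end; lia.

Lemma ex_min_prop (P : nat -> Prop) :
  (exists n, P n) -> exists n, P n /\ forall m, P m -> n <= m.
Proof.
move=> [n0 Pn0].
have: forall b n, n <= b -> P n -> exists n, P n /\ forall m, P m -> n <= m.
  elim=> [|b IH] n.
    rewrite leqn0 => /eqP -> P0; exists 0; split=> // m _.
  move=> le Pn; case: (classic (exists m, P m /\ m < n)) => [[m [Pm lt]]|H].
    apply: (IH m) => //; lia.
  exists n; split=> // m Pm; rewrite leqNgt; apply/negP => lt; apply: H; by exists m.
by move/(_ n0 n0 (leqnn _) Pn0).
Qed.

Lemma ex_max_prop (P : nat -> Prop) B :
  (exists n, P n) -> (forall n, P n -> n <= B) ->
  exists n, P n /\ forall m, P m -> m <= n.
Proof.
move=> [n0 Pn0] HB.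
have h0 : exists k, k <= B /\ P (B - k).
  exists (B - n0); split; [exact: leq_subr | by rewrite subKn ?HB].
have [k [[kB Pk] Hk]] := ex_min_prop h0.
exists (B - k); split=> // m Pm.
have h1 : B - m <= B /\ P (B - (B - m)) by split; [exact: leq_subr | rewrite subKn ?HB].
have := Hk _ h1.
have := HB m Pm; lia.
Qed.

Section Gen.
Variable T : eqType.

Lemma path_rev_sym (e : rel T) : symmetric e -> forall a s b,
  path e a (rcons s b) -> path e b (rcons (rev s) a).
Proof.
move=> sym a s b H.
have := rev_path e a (rcons s b).
rewrite last_rcons belast_rcons rev_cons => ->.
by rewrite (@eq_path _ _ e) // => u w; rewrite /= sym.
Qed.

Lemma uniq_catI (s1 s2 : seq T) : uniq s1 -> uniq s2 ->
  (forall z, z \in s1 -> z \in s2 -> False) -> uniq (s1 ++ s2).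
Proof.
move=> u1 u2 D; rewrite cat_uniq u1 u2 andbT /=.
apply/hasP => [[z z2 z1]]; exact: (D z).
Qed.

Definition gseg (f : nat -> T) p q := map f (iota p q).

Lemma gseg_path (e : rel T) f p q :
  (forall t, p <= t -> t < p + q -> e (f t) (f t.+1)) ->
  path e (f p) (gseg f p.+1 q).
Proof.
elim: q p => [//|q IH] p H /=.
rewrite (H p) ?leqnn ?addnS ?ltnS ?leq_addr //=.
apply: IH => t h1 h2; apply: H; lia.
Qed.

Lemma gseg_last f p q z : last z (gseg f p.+1 q) = if q is 0 then z else f (p + q).
Proof.
elim: q p z => [//|q IH] p z /=.
rewrite IH; case: q {IH} => [|q]; first by rewrite addn1.
by rewrite addSnnS.
Qed.

Lemma gseg_lastf f p q : last (f p) (gseg f p.+1 q) = f (p + q).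
Proof. by rewrite gseg_last; case: q => //; rewrite addn0. Qed.

Lemma mem_gseg f p q z : z \in gseg f p q -> exists t, p <= t < p + q /\ z = f t.
Proof. by move/mapP => [t]; rewrite mem_iota => ht ->; exists t. Qed.

Lemma gseg_uniq f p q :
  (forall t1 t2, p <= t1 < p + q -> p <= t2 < p + q -> f t1 = f t2 -> t1 = t2) ->
  uniq (gseg f p q).
Proof.
move=> H; rewrite /gseg map_inj_in_uniq ?iota_uniq //.
move=> t1 t2; rewrite !mem_iota; exact: H.
Qed.

Lemma size_gseg f p q : size (gseg f p q) = q.
Proof. by rewrite size_map size_iota. Qed.


Lemma notin_take_index (u : T) s : u \notin take (index u s) s.
Proof.
elim: s => [//|a s IH] /=; case: ifP => [//|/negbT hau] /=.
by rewrite in_cons negb_or IH eq_sym hau.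
Qed.

Lemma take_find_notin (a : pred T) s z : z \in take (find a s) s -> ~~ a z.
Proof.
elim: s => [//|b s IH] /=; case: ifP => [//|/negbT hb] /=.
by rewrite in_cons => /orP [/eqP ->|/IH].
Qed.

End Gen.
Section Main.
Variables (T : finType) (e : rel T) (x y : T) (p0 : seq T).
Hypothesis Hirr : irreflexive e.
Hypothesis Hsym : symmetric e.
Hypothesis Hxy : x != y.
Hypothesis HP : xy_path e x y p0.
Hypothesis Hlong : forall p, xy_path e x y p -> size p <= size p0.
Hypothesis Hmod : forall p, xy_path e x y p -> size p %% 3 = size p0 %% 3.

Local Notation vs := (x :: p0).
Local Notation N := (size (x :: p0)).
Local Notation v := (nth x (x :: p0)).

Lemma vs_uniq : uniq vs.
Proof. by case/and3P: HP. Qed.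

Lemma vs_path : path e x p0.
Proof. by case/and3P: HP. Qed.

Lemma v_last : v (N.-1) = y.
Proof. by rewrite nth_last /=; case/and3P: HP => _ /eqP. Qed.

Lemma v_edge t : t.+1 < N -> e (v t) (v t.+1).
Proof. move=> h; exact: (pathP x vs_path). Qed.

Lemma v_inj i j : i < N -> j < N -> v i = v j -> i = j.
Proof.
move=> hi hj h; apply/eqP; rewrite -(nth_uniq x hi hj vs_uniq); exact/eqP.
Qed.

Lemma v_mem t : t < N -> v t \in vs.
Proof. exact: mem_nth. Qed.

Lemma in_vs z : z \in vs -> exists2 t, t < N & z = v t.
Proof. by move=> h; exists (index z vs); rewrite ?index_mem ?nth_index. Qed.

Definition dist a b := maxn a b - minn a b.

Inductive oear a b r : Prop :=
  OEar of a < N & b < N & a != b & path e (v a) (rcons r (v b)) &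
   uniq r & (forall z, z \in r -> z \notin vs) & (0 < size r) || (1 < dist a b).

Lemma oear_sym a b r : oear a b r -> oear b a (rev r).
Proof.
case=> ha hb hab hp hu hn hs; split=> //.
- by rewrite eq_sym.
- exact: path_rev_sym.
- by rewrite rev_uniq.
- by move=> z; rewrite mem_rev; apply: hn.
- by rewrite size_rev /dist maxnC minnC.
Qed.

Lemma xy_pathI p : path e x p -> last x p = y -> uniq (x :: p) -> xy_path e x y p.
Proof. by move=> h1 h2 h3; rewrite /xy_path h1 h2 eqxx h3. Qed.

Lemma reroute1 a b r : oear a b r -> a < b ->
  (a + size r + (N - b)) %% 3 = (N - 1) %% 3 /\ a + size r + (N - b) <= N - 1.
Proof.
case=> ha hb hab hp hu hn _ hlt.
have hN : N = (size p0).+1 := erefl.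
set p := gseg v 1 a ++ r ++ v b :: gseg v b.+1 (N - b.+1).
have sz : size p = a + size r + (N - b).
  rewrite /p !size_cat /= !size_gseg; mlia.
have hpath : path e x p.
  rewrite /p cat_path.
  have -> : x = v 0 by [].
  rewrite gseg_path; last by move=> t _ ht; apply: v_edge; mlia.
  rewrite gseg_lastf add0n cat_path.
  move: hp; rewrite rcons_path => /andP [h1 h2]; rewrite h1 /= h2 /=.
  apply: gseg_path => t _ ht; apply: v_edge; mlia.
have hlast : last x p = y.
  rewrite /p !last_cat /= gseg_lastf -v_last; congr nth; mlia.
have huniq : uniq (x :: p).
  have -> : x :: p = gseg v 0 a.+1 ++ r ++ gseg v b (N - b).
    rewrite /p /gseg; have -> : N - b = (N - b.+1).+1 by mlia.
    by [].
  apply: uniq_catI; [| apply: uniq_catI | ].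
  - apply: gseg_uniq => t1 t2 h1 h2; apply: v_inj; mlia.
  - exact: hu.
  - apply: gseg_uniq => t1 t2 h1 h2; apply: v_inj; mlia.
  - move=> z /hn h /mem_gseg [t [ht hz]]; subst z.
    have : v t \in vs by apply: v_mem; mlia.
    by rewrite (negbTE h).
  - move=> z /mem_gseg [t [ht ->]]; rewrite mem_cat => /orP [/hn h|/mem_gseg [t' [ht' /v_inj h]]].
      have : v t \in vs by apply: v_mem; mlia.
      by rewrite (negbTE h).
    have := h ltac:(mlia) ltac:(mlia); mlia.
have hx : xy_path e x y p by apply: xy_pathI.
have := Hmod hx; have := Hlong hx; rewrite sz /=; mlia.
Qed.


Lemma ear_notv (r : seq T) z t : (forall z, z \in r -> z \notin vs) -> z \in r -> t < N -> z = v t -> False.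
Proof.
move=> hn hz ht hzt; have := hn _ hz; rewrite hzt.
have : v t \in vs by apply: v_mem.
by move=> ->.
Qed.

Lemma reroute2 a b r1 c d r2 : oear a b r1 -> oear c d r2 -> a < c -> c < b -> b < d ->
  (forall z, z \in r1 -> z \in r2 -> False) ->
  (a + size r1 + 1 + (b - c) + size r2 + (N - d)) %% 3 = (N - 1) %% 3.
Proof.
case=> ha hb _ hp1 hu1 hn1 _; case=> hc hd _ hp2 hu2 hn2 _ hac hcb hbd hdis.
have hN : N = (size p0).+1 := erefl.
pose fd t := v (b - t).
have efd : gseg fd 0 (b - c).+1 = v b :: gseg fd 1 (b - c).
  by rewrite /gseg /= /fd subn0.
set p := gseg v 1 a ++ r1 ++ v b :: gseg fd 1 (b - c) ++ r2 ++ v d :: gseg v d.+1 (N - d.+1).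
have sz : size p = a + size r1 + 1 + (b - c) + size r2 + (N - d).
  rewrite /p !size_cat /= !size_cat /= !size_gseg; mlia.
have hpath : path e x p.
  rewrite /p cat_path.
  have -> : x = v 0 by [].
  rewrite gseg_path; last by move=> t _ ht; apply: v_edge; mlia.
  rewrite gseg_lastf add0n cat_path.
  move: hp1; rewrite rcons_path => /andP [h1 h2]; rewrite h1 /= h2 /=.
  have -> : v b = fd 0 by rewrite /fd subn0.
  rewrite cat_path gseg_path; last first.
    move=> t _ ht; rewrite /fd Hsym.
    have -> : b - t = (b - t.+1).+1 by mlia.
    apply: v_edge; mlia.
  rewrite gseg_lastf add0n /fd.
  have -> : b - (b - c) = c by mlia.
  rewrite cat_path.
  move: hp2; rewrite rcons_path => /andP [h3 h4]; rewrite h3 /= h4 /=.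
  apply: gseg_path => t _ ht; apply: v_edge; mlia.
have hlast : last x p = y.
  rewrite /p !last_cat /= !last_cat /= gseg_lastf -v_last; congr nth; mlia.
have huniq : uniq (x :: p).
  clear hpath hlast sz Hmod Hlong.
  have -> : x :: p = gseg v 0 a.+1 ++ r1 ++ gseg fd 0 (b - c).+1 ++ r2 ++ gseg v d (N - d).
    rewrite efd /p /gseg; have -> : N - d = (N - d.+1).+1 by mlia.
    by [].
  clear efd; clearbody p; clear p hp1 hp2.
  have Uv : forall p q, p + q <= N -> uniq (gseg v p q).
    move=> p' q' hq; apply: gseg_uniq => t1 t2 h1 h2; apply: v_inj; mlia.
  have Ud : uniq (gseg fd 0 (b - c).+1).
    apply: gseg_uniq => t1 t2 h1 h2 /v_inj; rewrite /fd => h; have := h ltac:(mlia) ltac:(mlia); mlia.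
  have UE : uniq (gseg v d (N - d)) by apply: Uv; mlia.
  have U4 : uniq (r2 ++ gseg v d (N - d)).
    apply: uniq_catI => // z hz /mem_gseg [t [ht ht']]; apply: (ear_notv hn2 hz _ ht'); mlia.
  have U3 : uniq (gseg fd 0 (b - c).+1 ++ r2 ++ gseg v d (N - d)).
    apply: uniq_catI => // z /mem_gseg [t [ht ->]]; rewrite mem_cat => /orP [h|/mem_gseg [t' [ht' h]]].
      apply: (ear_notv hn2 h _ (erefl _)); mlia.
    have := v_inj _ _ h; rewrite /fd => h'; have := h' ltac:(mlia) ltac:(mlia); mlia.
  have U2 : uniq (r1 ++ gseg fd 0 (b - c).+1 ++ r2 ++ gseg v d (N - d)).
    apply: uniq_catI => // z hz; rewrite mem_cat => /orP [/mem_gseg [t [ht ht']]|].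
      apply: (ear_notv hn1 hz _ ht'); mlia.
    rewrite mem_cat => /orP [h|/mem_gseg [t [ht ht']]]; first exact: (hdis z hz h).
    apply: (ear_notv hn1 hz _ ht'); mlia.
  apply: uniq_catI => //; first by apply: Uv; mlia.
  move=> z /mem_gseg [t [ht ->]]; rewrite !mem_cat => /orP [h|/orP [/mem_gseg [t' [ht' h]]|/orP [h|/mem_gseg [t' [ht' h]]]]].
  + apply: (ear_notv hn1 h _ (erefl _)); mlia.
  + have := v_inj _ _ h; rewrite /fd => h'; have := h' ltac:(mlia) ltac:(mlia); mlia.
  + apply: (ear_notv hn2 h _ (erefl _)); mlia.
  + have := v_inj _ _ h => h'; have := h' ltac:(mlia) ltac:(mlia); mlia.
have hx : xy_path e x y p by apply: xy_pathI.
have := Hmod hx; rewrite sz /=; mlia.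
Qed.


Lemma combine a m1 r1 c m2 r2 : oear a m1 r1 -> oear c m2 r2 -> a != c ->
  has (mem r2) r1 -> exists r, oear a c r.
Proof.
case=> ha hm1 _ hp1 hu1 hn1 _; case=> hc hm2 _ hp2 hu2 hn2 _ hac hh.
have hi1 : find (mem r2) r1 < size r1 by rewrite -has_find.
set i1 := find (mem r2) r1 in hi1.
have hur2 : nth x r1 i1 \in r2 by have := nth_find x hh.
set u := nth x r1 i1 in hur2.
have d1 : r1 = take i1 r1 ++ u :: drop i1.+1 r1 by rewrite -drop_nth // cat_take_drop.
set i2 := index u r2.
have d2 : r2 = take i2 r2 ++ u :: drop i2.+1 r2.
  by rewrite -{1}(nth_index x hur2) -drop_nth ?index_mem // cat_take_drop.
exists (take i1 r1 ++ u :: rev (take i2 r2)); split=> //.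
- rewrite rcons_cat rcons_cons cat_path.
  move: hp1; rewrite {1}d1 rcons_cat rcons_cons cat_path => /andP [-> /= /andP [-> _]] /=.
  apply: path_rev_sym => //.
  move: hp2; rewrite {1}d2 rcons_cat rcons_cons cat_path => /andP [h1 /= /andP [h2 _]].
  by rewrite rcons_path h1 h2.
- have : uniq (take i1 r1 ++ u :: drop i1.+1 r1) by rewrite -d1.
  rewrite cat_uniq => /and3P [ut nh _].
  have ut1 : u \notin take i1 r1 by apply: contra nh => h; rewrite /= h.
  rewrite cat_uniq ut /= rev_uniq mem_rev notin_take_index take_uniq // andbT.
  rewrite negb_or ut1 /= andbT.
  apply/hasP => [[z hz hz1]].
  move: hz; rewrite mem_rev => /mem_take hz2.
  by have := take_find_notin hz1; rewrite /= hz2.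
- move=> z; rewrite mem_cat => /orP [/mem_take/hn1 //|].
  rewrite in_cons => /orP [/eqP -> |]; first exact: hn2.
  by rewrite mem_rev => /mem_take/hn2.
- by rewrite size_cat /= addnS.
Qed.


Lemma y_in : y \in vs.
Proof. rewrite -v_last; apply: v_mem; by []. Qed.

Lemma x_in : x \in vs.
Proof. exact: mem_head. Qed.

Lemma addE_l a b : add_edge e x y a b -> a \notin vs -> e a b.
Proof.
rewrite /add_edge => /or3P [//| /andP [/eqP -> _] | /andP [/eqP -> _]].
  by rewrite x_in.
by rewrite y_in.
Qed.

Lemma addE_r a b : add_edge e x y a b -> b \notin vs -> e a b.
Proof.
rewrite /add_edge => /or3P [//| /andP [_ /eqP ->] | /andP [_ /eqP ->]].
  by rewrite y_in.
by rewrite x_in.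
Qed.

Lemma pathH_e z s u : path (add_edge e x y) z (rcons s u) ->
  (forall q, q \in z :: s -> q \notin vs) -> path e z (rcons s u).
Proof.
elim: s z => [|a s IH] z /=.
  by rewrite andbT => h hn; rewrite (addE_l h) // hn // mem_head.
move=> /andP [h1 h2] hn; rewrite (addE_l h1) ?hn ?mem_head //=.
apply: IH => // q hq; apply: hn; by rewrite in_cons hq orbT.
Qed.

Lemma ear_chord l w : l < N -> e (v l) w -> w \in vs -> w != v l.-1 -> w != v l.+1 ->
  exists m r, oear l m r.
Proof.
move=> hl hw hwv h1 h2.
have hm : index w vs < N by rewrite index_mem.
have hvm : v (index w vs) = w by rewrite nth_index.
exists (index w vs), [::]; split=> //.
- apply/eqP => heq; move: hw; rewrite -hvm -heq; by rewrite Hirr.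
- by rewrite /= hvm hw.
- have n1 : index w vs != l.+1 by apply: contraNneq h2 => <-; rewrite hvm.
  have n2 : index w vs != l.-1 by apply: contraNneq h1 => <-; rewrite hvm.
  have n3 : index w vs != l by apply/eqP => heq; move: hw; rewrite -hvm heq Hirr.
  rewrite /dist; clear -n1 n2 n3; lia.
Qed.

Hypothesis H2c : two_connected (add_edge e x y).

Lemma ear_off l w : l < N -> e (v l) w -> w \notin vs -> exists m r, oear l m r.
Proof.
move=> hl hw hwn.
pose t := if v l == x then y else x.
have ht : t \in vs by rewrite /t; case: ifP => _; [exact: y_in | exact: x_in].
have htl : t != v l.
  rewrite /t; case: ifP => [/eqP ->|/negbT]; by rewrite eq_sym // eq_sym.
have hwl : w != v l by apply: contraNneq hwn => ->; apply: v_mem.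
have [q /and3P [hq /eqP hlq hall]] := H2c.2 (v l) w t
   ltac:(by rewrite !inE) ltac:(by rewrite !inE).
have [q' [hq' [huq [hsub hl']]]] : exists q', path (add_edge e x y) w q' /\
   uniq (w :: q') /\ {subset q' <= q} /\ last w q' = last w q.
  by case: (shortenP hq) => q' h1 h2 h3; exists q'.
rewrite hlq in hl'.
have hhas : has (mem vs) q'.
  have := mem_last w q'; rewrite hl' in_cons => /orP [/eqP htw|htq].
    by move: hwn; rewrite -htw ht.
  by apply/hasP; exists t.
have hi : find (mem vs) q' < size q' by rewrite -has_find.
set i := find (mem vs) q' in hi.
have hu : nth x q' i \in vs by have := nth_find x hhas.
set u := nth x q' i in hu.
have dq : q' = take i q' ++ u :: drop i.+1 q' by rewrite -drop_nth // cat_take_drop.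
have hul : u != v l.
  have : u \in q by apply: hsub; apply: mem_nth.
  by move/(allP hall); rewrite !inE.
have hoff : forall z, z \in w :: take i q' -> z \notin vs.
  move=> z; rewrite in_cons => /orP [/eqP -> //|hz].
  exact: (take_find_notin hz).
exists (index u vs), (w :: take i q'); split=> //.
- by rewrite index_mem.
- by apply/eqP => heq; move: hul; rewrite heq nth_index // eqxx.
- rewrite nth_index // rcons_cons /= hw /=.
  apply: pathH_e => //.
  move: hq'; rewrite {1}dq cat_path => /andP [h1 /= /andP [h2 _]].
  by rewrite rcons_path h1 h2.
- by have := take_uniq i.+1 huq.
Qed.


Lemma ear_of_third l w : l < N -> e (v l) w -> w != v l.-1 -> w != v l.+1 ->
  exists m r, oear l m r.
Proof.
move=> hl hw h1 h2; case: (boolP (w \in vs)) => hwv.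
  exact: (ear_chord hl hw hwv h1 h2).
exact: (ear_off hl hw hwv).
Qed.

Lemma deg2_of u a b : e u a -> e u b -> a != b ->
  (forall w, e u w -> (w == a) || (w == b)) -> deg e u = 2.
Proof.
move=> ha hb hab h; rewrite /deg.
have -> : [set w | e u w] = [set a; b].
  apply/setP => w; rewrite !inE; apply/idP/idP => [/h //|/orP [/eqP -> //|/eqP -> //]].
by rewrite cards2 hab.
Qed.

Lemma third_nb u a b : e u a -> e u b -> a != b -> deg e u != 2 ->
  exists w, [/\ e u w, w != a & w != b].
Proof.
move=> ha hb hab hd.
case: (boolP [exists w, [&& e u w, w != a & w != b]]) => [/existsP [w /and3P [h1 h2 h3]]|hn].
  by exists w.
exfalso; move/eqP: hd; apply; apply: (deg2_of ha hb hab) => w hw.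
move/existsPn: hn => /(_ w); rewrite hw /= negb_and !negbK => /orP [->|->] //.
by rewrite orbT.
Qed.

Lemma interior_third l : 0 < l -> l.+1 < N -> deg e (v l) != 2 ->
  exists w, [/\ e (v l) w, w != v l.-1 & w != v l.+1].
Proof.
move=> h0 h1 hd; apply: third_nb => //.
- rewrite Hsym; have -> : l = l.-1.+1 by lia.
  rewrite -pred_Sn; apply: v_edge; lia.
- exact: v_edge.
- apply/eqP => /v_inj h; have := h ltac:(mlia) ltac:(mlia); mlia.
Qed.

Hypothesis Hind : independent e (N2 e :\: [set x; y]).
Hypothesis HC4 : ~ has_C4 e.
Hypothesis Hcard : 4 <= #|T|.

Lemma interior_notxy l : 0 < l -> l.+1 < N -> v l \notin [set x; y].
Proof.
move=> h0 h1; rewrite !inE negb_or; apply/andP; split.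
  apply/eqP => h; have : v l = v 0 by [].
  move/v_inj => h'; have := h' ltac:(mlia) ltac:(mlia); mlia.
apply/eqP => h; move: h; rewrite -v_last => /v_inj h'; have := h' ltac:(mlia) ltac:(mlia); mlia.
Qed.

Lemma indep_contra l : 0 < l -> l.+2 < N -> deg e (v l) = 2 -> deg e (v l.+1) = 2 -> False.
Proof.
move=> h0 h1 d1 d2.
have hu : v l \in N2 e :\: [set x; y].
  by rewrite in_setD (interior_notxy h0 (ltnW h1)) /N2 inE d1.
have hw : v l.+1 \in N2 e :\: [set x; y].
  by rewrite in_setD (interior_notxy (ltn0Sn l) h1) /N2 inE d2.
by have := Hind hu hw; rewrite v_edge // ltnW.
Qed.


Lemma exit_edge z : z \notin vs -> exists l w, [/\ l < N, w \notin vs & e (v l) w].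
Proof.
move=> hz.
have hzy : z != y by apply: contraNneq hz => ->; exact: y_in.
have [q /and3P [hq /eqP hlq _]] := H2c.2 y x z
   ltac:(by rewrite !inE) ltac:(by rewrite !inE).
have hhas : has (predC (mem vs)) q.
  have := mem_last x q; rewrite hlq in_cons => /orP [/eqP hzx|hzq].
    by move: hz; rewrite hzx x_in.
  by apply/hasP; exists z.
have hi : find (predC (mem vs)) q < size q by rewrite -has_find.
have hu : (predC (mem vs)) (nth x q (find (predC (mem vs)) q)) by apply: nth_find.
set i := find (predC (mem vs)) q in hi hu.
have hprev : nth x (x :: q) i \in vs.
  case: (posnP i) => [->|hpos]; first exact: x_in.
  have -> : nth x (x :: q) i = nth x q i.-1 by rewrite -[in LHS](prednK hpos).
  have hlt : i.-1 < find (predC (mem vs)) q by rewrite -/i; mlia.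
  by have := before_find x hlt; rewrite /= => /negbFE.
have hedge := (pathP x hq) i hi.
exists (index (nth x (x :: q) i) vs), (nth x q i); split.
- by rewrite index_mem.
- exact: hu.
- by rewrite nth_index //; apply: addE_r.
Qed.

Lemma some_ear : exists a b r, oear a b r.
Proof.
have hN : N = (size p0).+1 := erefl.
case: (leqP 4 N) => hN4.
  case: (boolP (deg e (v 1) == 2)) => [/eqP d1|d1].
    have d2 : deg e (v 2) != 2 by apply/eqP => d2; apply: (indep_contra (l := 1)).
    have [w [h1 h2 h3]] := interior_third (l := 2) isT hN4 d2.
    have [m [r hr]] := ear_of_third (ltnW hN4) h1 h2 h3; by exists 2, m, r.
  have [w [h1 h2 h3]] := interior_third (l := 1) isT (ltnW hN4) d1.
  have [m [r hr]] := ear_of_third (ltnW (ltnW hN4)) h1 h2 h3; by exists 1, m, r.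
case: (classic (exists z, z \notin vs)) => [[z hz]|hn].
  have [l [w [hl hw hew]]] := exit_edge hz.
  have [m [r hr]] := ear_off hl hew hw; by exists l, m, r.
exfalso.
have : #|T| <= N.
  apply: leq_trans (card_size vs); apply: subset_leq_card.
  apply/subsetP => z _; apply/negPn/negP => hz; apply: hn; by exists z.
move: Hcard hN4; clear; lia.
Qed.


Lemma vne a b : a < N -> b < N -> a != b -> v a != v b.
Proof. move=> ha hb; apply: contra => /eqP h; apply/eqP; exact: v_inj. Qed.

Lemma final : False.
Proof.
have hN : N = (size p0).+1 := erefl.
have hex : exists s, exists a b r, oear a b r /\ dist a b = s.
  have [a [b [r h]]] := some_ear; by exists (dist a b), a, b, r.
have [s [[a0 [b0 [r0 [hQ0 hd0]]]] hmin0]] := ex_min_prop hex.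
have hmin : forall a b r, oear a b r -> s <= dist a b.
  by move=> a b r h; apply: hmin0; exists a, b, r.
have [i [j [rq [hQ [hij hs]]]]] : exists i j rq, oear i j rq /\ i < j /\ j - i = s.
  case: (ltngtP a0 b0) => h.
  - by exists a0, b0, r0; split=> //; split=> //; rewrite -hd0 /dist; mlia.
  - exists b0, a0, (rev r0); split; first exact: oear_sym.
    by split=> //; rewrite -hd0 /dist; mlia.
  - by case: hQ0 => _ _; rewrite h eqxx.
clear a0 b0 r0 hQ0 hd0 hmin0 hex.
have hiN : i < N by case: hQ.
have hjN : j < N by case: hQ.
have [F1 F2] := reroute1 hQ hij.
have F3 : (0 < size rq) || (1 < dist i j) by case: hQ.
have hs2 : 2 <= s by move: F3; rewrite /dist; clear -F1 F2 hs hij hN hjN; mlia.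
case: (eqVneq s 2) => [hs2'|hs3].
  have hr1 : size rq = 1 by clear -F1 F2 hs hs2' hij hN hjN; mlia.
  case: rq hQ F1 F2 F3 hr1 => [|q [|]] // hQ _ _ _ _.
  apply: HC4; exists (v i), (v i.+1), (v i.+2), q.
  have hj2 : j = i.+2 by mlia.
  subst j; case: hQ => _ _ _ hp _ hn _.
  move: hp => /= /and3P [hq1 hq2 _].
  have hqn := hn q (mem_head _ _).
  have qne : forall t, t < N -> v t != q.
    by move=> t ht; apply: contraNneq hqn => <-; apply: v_mem.
  split.
    have n1 := vne (a := i) (b := i.+1) ltac:(mlia) ltac:(mlia) ltac:(mlia).
    have n2 := vne (a := i) (b := i.+2) ltac:(mlia) ltac:(mlia) ltac:(mlia).
    have n3 := vne (a := i.+1) (b := i.+2) ltac:(mlia) ltac:(mlia) ltac:(mlia).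
    have q1 := qne i ltac:(mlia).
    have q2 := qne i.+1 ltac:(mlia).
    have q3 := qne i.+2 ltac:(mlia).
    by rewrite /= !inE !negb_or n1 n2 n3 q1 q2 q3.
  have E1 := v_edge (t := i) ltac:(mlia).
  have E2 := v_edge (t := i.+1) ltac:(mlia).
  apply/and4P; split; [exact: E1 | exact: E2 | by rewrite Hsym | by rewrite Hsym].
have hs3' : 3 <= s by mlia.
have side : forall l w, i < l -> l < j -> e (v l) w -> w != v l.-1 -> w != v l.+1 ->
  exists m r, [/\ oear l m r, ~~ has (mem rq) r &
     ((j < m /\ l %% 3 = j %% 3) \/ (m < i /\ l %% 3 = i %% 3))].
  move=> l w hil hlj hw h1 h2.
  have hlN : l < N by mlia.
  have [m [r hr]] := ear_of_third hlN hw h1 h2.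
  case: (boolP (has (mem rq) r)) => hh.
    have hli : l != i by mlia.
    have [r' hr'] := combine hr hQ hli hh.
    by have := hmin _ _ _ hr'; rewrite /dist; mlia.
  have hdis : forall z, z \in rq -> z \in r -> False.
    by move=> z hz1 hz2; move/negP: hh; apply; apply/hasP; exists z.
  have hml : l != m by case: hr.
  have hmN : m < N by case: hr.
  case: (ltnP j m) => hjm.
    exists m, r; split=> //; left; split=> //.
    have := reroute2 hQ hr hil hlj hjm hdis.
    have [G1 G2] := reroute1 hr ltac:(mlia).
    move: F1 F2 G1 G2 hs hil hlj hjm hiN hjN hN hmN; clear; lia.
  case: (ltnP m i) => hmi.
    exists m, r; split=> //; right; split=> //.
    have hr2 := oear_sym hr.
    have := reroute2 hr2 hQ hmi hil hlj ltac:(by move=> z; rewrite mem_rev => h1' h2'; exact: (hdis z h2' h1')).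
    have [G1 G2] := reroute1 hr2 ltac:(mlia).
    rewrite size_rev in G1 G2 *.
    move: F1 F2 G1 G2 hs hil hlj hmi hiN hjN hN hmN; clear; lia.
  by have := hmin _ _ _ hr; rewrite /dist; move: hml hmi hjm hs hil hlj; clear; lia.
have cross : forall l1 l2 m1 m2 r1 r2, i < l1 -> l1 < l2 -> l2 < j ->
    oear l1 m1 r1 -> j < m1 -> oear l2 m2 r2 -> m2 < i -> l1 %% 3 != l2 %% 3 -> False.
  move=> l1 l2 m1 m2 r1 r2 h1 h2 h3 hr1 hm1 hr2 hm2 hne.
  case: (boolP (has (mem r2) r1)) => hh.
    have hl : l1 != l2 by mlia.
    have [r' hr'] := combine hr1 hr2 hl hh.
    by have := hmin _ _ _ hr'; rewrite /dist; mlia.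
  have hr2' := oear_sym hr2.
  have hm1N : m1 < N by case: hr1.
  have := reroute2 hr2' hr1 ltac:(mlia) h2 ltac:(mlia)
    ltac:(by move=> z; rewrite mem_rev => z1 z2; move/negP: hh; apply; apply/hasP; exists z).
  have [G1 G2] := reroute1 hr1 ltac:(mlia).
  have [G3 G4] := reroute1 hr2' ltac:(mlia).
  rewrite size_rev in G3 G4 *.
  move: G1 G2 G3 G4 hne h1 h2 h3 hm1 hm2 hiN hjN hN hm1N; clear; lia.
have nodeg : forall l, i < l -> l < j -> l %% 3 != i %% 3 -> l %% 3 != j %% 3 -> deg e (v l) = 2.
  move=> l h1 h2 h3 h4; case: (eqVneq (deg e (v l)) 2) => // hd; exfalso.
  have [w [hw1 hw2 hw3]] := interior_third (l := l) ltac:(mlia) ltac:(mlia) hd.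
  have [m [r [_ _ hor]]] := side l w h1 h2 hw1 hw2 hw3.
  move: hor h3 h4; clear; lia.
have third : forall l, i < l -> l < j -> deg e (v l) != 2 ->
    exists m r, [/\ oear l m r, ~~ has (mem rq) r &
     ((j < m /\ l %% 3 = j %% 3) \/ (m < i /\ l %% 3 = i %% 3))].
  move=> l h1 h2 hd.
  have [w [hw1 hw2 hw3]] := interior_third (l := l) ltac:(mlia) ltac:(mlia) hd.
  exact: side l w h1 h2 hw1 hw2 hw3.
case: (eqVneq (s %% 3) 0) => [h0|h0].
  have d1 := nodeg i.+1 ltac:(mlia) ltac:(mlia) ltac:(mlia) ltac:(mlia).
  have d2 := nodeg i.+2 ltac:(mlia) ltac:(mlia) ltac:(mlia) ltac:(mlia).
  exact: (indep_contra (l := i.+1) ltac:(mlia) ltac:(mlia) d1 d2).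
case: (eqVneq (s %% 3) 1) => [h1|h1].
  have d2 := nodeg i.+2 ltac:(mlia) ltac:(mlia) ltac:(mlia) ltac:(mlia).
  have d1 : deg e (v i.+1) != 2.
    by apply/eqP => d1; apply: (indep_contra (l := i.+1) ltac:(mlia) ltac:(mlia) d1 d2).
  have d3 : deg e (v i.+3) != 2.
    by apply/eqP => d3; apply: (indep_contra (l := i.+2) ltac:(mlia) ltac:(mlia) d2 d3).
  have [m1 [r1 [hr1 _ hor1]]] := third i.+1 ltac:(mlia) ltac:(mlia) d1.
  have [m2 [r2 [hr2 _ hor2]]] := third i.+3 ltac:(mlia) ltac:(mlia) d3.
  have hm1 : j < m1 by move: hor1 hs h1 hs3'; clear; lia.
  have hm2 : m2 < i by move: hor2 hs h1 hs3'; clear; lia.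
  exact: (cross i.+1 i.+3 m1 m2 r1 r2 ltac:(mlia) ltac:(mlia) ltac:(mlia) hr1 hm1 hr2 hm2 ltac:(mlia)).
have d1 := nodeg i.+1 ltac:(mlia) ltac:(mlia) ltac:(mlia) ltac:(mlia).
have d4 := nodeg i.+4 ltac:(mlia) ltac:(mlia) ltac:(mlia) ltac:(mlia).
have d2 : deg e (v i.+2) != 2.
  by apply/eqP => d2; apply: (indep_contra (l := i.+1) ltac:(mlia) ltac:(mlia) d1 d2).
have d3 : deg e (v i.+3) != 2.
  by apply/eqP => d3; apply: (indep_contra (l := i.+3) ltac:(mlia) ltac:(mlia) d3 d4).
have [m1 [r1 [hr1 _ hor1]]] := third i.+2 ltac:(mlia) ltac:(mlia) d2.
have [m2 [r2 [hr2 _ hor2]]] := third i.+3 ltac:(mlia) ltac:(mlia) d3.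
have hm1 : j < m1 by move: hor1 hs h0 h1 hs3'; clear; lia.
have hm2 : m2 < i by move: hor2 hs h0 h1 hs3'; clear; lia.
exact: (cross i.+2 i.+3 m1 m2 r1 r2 ltac:(mlia) ltac:(mlia) ltac:(mlia) hr1 hm1 hr2 hm2 ltac:(mlia)).
Qed.

End Main.

Lemma pathH_avoid (T : finType) (e : rel T) x y c a s :
  path (add_edge e x y) a s -> (forall u, u \in a :: s -> u != c) ->
  (c == x) || (c == y) -> path e a s.
Proof.
move=> + + hc; elim: s a => [//|b s IH] a /= /andP [hab hp] hn.
rewrite IH; last 2 first.
- exact: hp.
- by move=> u hu; apply: hn; rewrite in_cons hu orbT.
have ha := hn a (mem_head _ _).
have hb : b != c by apply: hn; rewrite !inE eqxx orbT.
move: hab; rewrite /add_edge andbT.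
case/orP: hc => /eqP ?; subst c.
  by rewrite (negbTE ha) (negbTE hb) /= !andbF !orbF.
by rewrite (negbTE ha) (negbTE hb) /= !andbF !orbF.
Qed.

Theorem lemma2p5 (T : finType) (e : rel T) (x y : T) :
  simple_graph e -> 4 <= #|T| -> x != y ->
  two_connected (add_edge e x y) ->
  independent e (N2 e :\: [set x; y]) ->
  ~ has_C4 e ->
  exists p1 p2 : seq T,
    [/\ xy_path e x y p1, xy_path e x y p2 & size p1 %% 3 != size p2 %% 3].
Proof.
move=> [Hirr Hsym] Hcard Hxy H2c Hind HC4.
apply: NNPP => Hn.
have Hmod' : forall p1 p2, xy_path e x y p1 -> xy_path e x y p2 ->
    size p1 %% 3 = size p2 %% 3.
  move=> p1 p2 h1 h2; apply/eqP; apply/negPn/negP => hne; apply: Hn.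
  by exists p1, p2; split.
have [z hz] : exists z, z \notin [set x; y].
  case: (pickP (fun z => z \notin [set x; y])) => [z hz|hn]; first by exists z.
  exfalso.
  have : #|T| <= #|[set x; y]|.
    apply: subset_leq_card; apply/subsetP => u _.
    by have := hn u; rewrite /= => /negbFE.
  move=> h; have := leq_trans Hcard h; rewrite cards2; by case: (x != y).
have hzx : z != x by apply: contraNneq hz => ->; rewrite !inE eqxx.
have hzy : z != y by apply: contraNneq hz => ->; rewrite !inE eqxx orbT.
have [q1 /and3P [hq1 /eqP hl1 ha1]] := H2c.2 y x z
   ltac:(by rewrite !inE) ltac:(by rewrite !inE).
have [q2 /and3P [hq2 /eqP hl2 ha2]] := H2c.2 x z y
   ltac:(by rewrite !inE) ltac:(by rewrite !inE eq_sym).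
have hp1 : path e x q1.
  apply: (pathH_avoid (c := y)) hq1 _ _; last by rewrite eqxx orbT.
  move=> u; rewrite in_cons => /orP [/eqP ->//|hu].
  by have := (allP ha1) u hu; rewrite !inE.
have hp2 : path e z q2.
  apply: (pathH_avoid (c := x)) hq2 _ _; last by rewrite eqxx.
  move=> u; rewrite in_cons => /orP [/eqP ->//|hu].
  by have := (allP ha2) u hu; rewrite !inE.
have hp : path e x (q1 ++ q2) by rewrite cat_path hp1 hl1.
have [pi [hpi [hupi hlpi]]] : exists p, path e x p /\ uniq (x :: p) /\ last x p = last x (q1 ++ q2).
  by case: (shortenP hp) => p' h1 h2 h3; exists p'.
rewrite last_cat hl1 hl2 in hlpi.
have hxpi : xy_path e x y pi by rewrite /xy_path hpi hlpi eqxx hupi.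
have hbound : forall n, (exists p, xy_path e x y p /\ size p = n) -> n <= #|T|.
  move=> n [p [/and3P [_ _ hu] <-]].
  have := card_uniqP hu; rewrite /= => hc.
  apply: leq_trans (leqnSn _) _; rewrite -hc; exact: max_card.
have [n [[p0 [hp0 hsz]] hmax]] := ex_max_prop
  (ex_intro (fun n => exists p, xy_path e x y p /\ size p = n) _ (ex_intro _ pi (conj hxpi erefl))) hbound.
apply: (@final T e x y p0) => //.
- by move=> p hp'; rewrite hsz; apply: hmax; exists p.
- by move=> p hp'; apply: Hmod'.
Qed.
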